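(* Let $L$ be a finite-dimensional Lie algebra over a field $F$ and let $M$ be a maximal subalgebra of $L$. Then the index complex $I(M)$ is non-empty; in fact, $I(M)$ contains an ideal of $L$.
   Context: For a nonzero subalgebra $B$ of $L$, the strict core $k(B)=k_L(B)$ is the sum of all ideals of $L$ that are proper subalgebras of $B$ (it is $0$ if there are none). A subalgebra $C$ of $L$ is a completion of the maximal subalgebra $M$ if $C\not\subseteq M$ but every proper subalgebra of $C$ that is an ideal of $L$ is contained in $M$ (equivalently, $C\not\subseteq M$ and $k(C)\subseteq M$). The index complex $I(M)$ is the set of all completions of $M$ in $L$. *)

(* Defs.v *)
From HB Require Import structures.
From mathcomp Require Import all_boot all_algebra.
Set Implicit Arguments. Unset Strict Implicit. Unset Printing Implicit Defensive.
Import GRing.Theory.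
Local Open Scope ring_scope.

Definition lie_bracket (F : fieldType) (L : vectType F) (br : L -> L -> L) :=
  [/\ (forall (a : F) (x y z : L), br (a *: x + y) z = a *: br x z + br y z),
      (forall (a : F) (x y z : L), br z (a *: x + y) = a *: br z x + br z y),
      (forall x : L, br x x = 0)
    & (forall x y z : L, br x (br y z) + br y (br z x) + br z (br x y) = 0)].

Definition subalg (F : fieldType) (L : vectType F) (br : L -> L -> L)
  (U : {vspace L}) := forall x y, x \in U -> y \in U -> br x y \in U.

Definition lie_ideal (F : fieldType) (L : vectType F) (br : L -> L -> L)
  (U : {vspace L}) := forall x y, y \in U -> br x y \in U.

Definition max_subalg (F : fieldType) (L : vectType F) (br : L -> L -> L)
  (M : {vspace L}) :=
  [/\ subalg br M, M != fullv
    & forall S : {vspace L}, subalg br S -> (M <= S)%VS -> S = M \/ S = fullv].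

Definition completion (F : fieldType) (L : vectType F) (br : L -> L -> L)
  (M C : {vspace L}) :=
  [/\ subalg br C, ~~ (C <= M)%VS
    & forall I : {vspace L}, subalg br I -> lie_ideal br I ->
        (I <= C)%VS -> I != C -> (I <= M)%VS].

Definition index_complex (F : fieldType) (L : vectType F) (br : L -> L -> L)
  (M : {vspace L}) : {vspace L} -> Prop := fun C => completion br M C.

(* Main.v *)
Require Import Defs.
From HB Require Import structures.
From mathcomp Require Import all_boot all_algebra.
From Stdlib Require Import Classical.

Lemma ideal_subalg (F : fieldType) (L : vectType F) (br : L -> L -> L)
  (U : {vspace L}) : lie_ideal br U -> subalg br U.
Proof. by move=> H x y _ yU; apply: H. Qed.

Lemma exists_min (F : fieldType) (L : vectType F) (br : L -> L -> L)
  (M : {vspace L}) : forall n (C : {vspace L}), (\dim C <= n)%N ->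
  lie_ideal br C -> ~~ (C <= M)%VS ->
  exists C', completion br M C' /\ lie_ideal br C'.
Proof.
elim=> [|n IH] C hd hI hM.
  exfalso; move: hd; rewrite leqn0 dimv_eq0 => /eqP C0.
  by move: hM; rewrite C0 sub0v.
case: (classic (exists I : {vspace L}, [/\ lie_ideal br I, (I <= C)%VS,
        I != C & ~~ (I <= M)%VS])).
  move=> [I [iI iC iN iM]]; apply: (IH I) => //.
  have: (\dim I < \dim C)%N.
    rewrite ltnNge; apply/negP => h; move: iN; apply/negP; rewrite negbK.
    by rewrite eqEdim iC h.
  move=> h; rewrite -ltnS; exact: leq_trans h hd.
move=> nex; exists C; split => //; split => //; first exact: ideal_subalg.
move=> I _ iI iC iN; apply/negPn/negP => iM; apply: nex; exists I; by split.
Qed.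

Theorem lemma1p1 (F : fieldType) (L : vectType F) (br : L -> L -> L)
  (Hbr : lie_bracket br) (M : {vspace L}) (HM : max_subalg br M) :
  (exists C, index_complex br M C) /\
  (exists C, index_complex br M C /\ lie_ideal br C).
Proof.
case: HM => _ Mf _.
have [C [hC hI]] : exists C', completion br M C' /\ lie_ideal br C'.
  apply: (@exists_min F L br M (\dim (fullv : {vspace L})) fullv) => //.
  - by move=> x y _; rewrite memvf.
  - apply/negP => h; move: Mf; apply/negP; rewrite negbK eqEsubv h subvf.
    by [].
by split; exists C.
Qed.
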